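(* Let $b>0$, $d\in\mathbb{N}^*$, and let $(G_n)_{n\ge0}$, $G_n=(V_n,E_n)$, be a $(b,d)$-expander. Let $\gamma\in[0,1[$ and $\varepsilon\in\,]0,1[$. Then there is some $c<1$ such that, for $|V_n|$ large enough, \[ \mu_{n,\gamma}\big(L_n^{(1)}\geq c|V_n|\big)\leq \varepsilon. \]
   Context: For a finite graph $G=(V,E)$, $E(A,B)$ is the set of edges with one endpoint in $A$ and the other in $B$, and the Cheeger constant is $c(G)=\min_{A\subset V,\,0<|A|\le |V|/2} |E(A,A^c)|/|A|$. A $(b,d)$-expander is a sequence of finite graphs $G_n=(V_n,E_n)$ such that for every $n$ the maximal degree of $G_n$ is at most $d$ and $c(G_n)>b$, with $|V_n|\to\infty$. Configurations $x\in\{0,1\}^{E_n}$ are identified with the spanning subgraph of $G_n$ keeping exactly the edges $e$ with $x(e)=1$; $\mu_{n,p}$ is the product measure on $\{0,1\}^{E_n}$ under which each $x(e)$ is independently $1$ with probability $p$ and $0$ otherwise. $L_n^{(1)}(x)$ is the number of vertices of the largest connected component of $x$. *)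

(* Defs.v *)
From mathcomp Require Import all_boot all_order all_algebra.
From mathcomp Require Import reals.
Set Implicit Arguments. Unset Strict Implicit. Unset Printing Implicit Defensive.
Import Order.TTheory GRing.Theory Num.Theory.
Local Open Scope ring_scope.

Definition simple_graph (V : finType) (adj : rel V) : Prop :=
  (forall x y, adj x y = adj y x) /\ (forall x, ~~ adj x x).

Definition edges (V : finType) (adj : rel V) : {set {set V}} :=
  [set e : {set V} | [exists x, exists y, adj x y && (e == [set x; y])]].

Definition edge_boundary (V : finType) (adj : rel V) (A : {set V}) : {set {set V}} :=
  [set e in edges adj | [exists x in A, exists y in ~: A, e == [set x; y]]].

Definition max_degree_le (V : finType) (adj : rel V) (d : nat) : Prop :=
  forall v : V, (#|[set w | adj v w]| <= d)%N.

(* c(G) > b, where c(G) = min_{0<|A|<=|V|/2} |E(A,A^c)|/|A|  (unfolded: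
   every admissible A has |E(A,A^c)|/|A| > b). *)
Definition cheeger_gt (R : realType) (V : finType) (adj : rel V) (b : R) : Prop :=
  forall A : {set V}, (0 < #|A|)%N -> (#|A| <= #|V| %/ 2)%N ->
    b < (#|edge_boundary adj A|)%:R / (#|A|)%:R.

Definition expander (R : realType) (V : nat -> finType) (adj : forall n, rel (V n))
    (b : R) (d : nat) : Prop :=
  (forall n, simple_graph (adj n)) /\
  (forall n, max_degree_le (adj n) d) /\
  (forall n, cheeger_gt (adj n) b) /\
  (forall M : nat, exists N : nat, forall n, (N <= n)%N -> (M <= #|V n|)%N).

(* A configuration is identified with its set of open edges w \subset E;
   the spanning subgraph keeps exactly the open edges. *)
Definition open_adj (V : finType) (w : {set {set V}}) : rel V :=
  fun x y => (x != y) && ([set x; y] \in w).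

Definition largest_component (V : finType) (w : {set {set V}}) : nat :=
  \max_(v : V) #|[set u | connect (open_adj w) v u]|.

(* mu_{p}(P) for the product Bernoulli(p) measure on {0,1}^E *)
Definition mu (R : realType) (V : finType) (adj : rel V) (p : R)
    (P : pred {set {set V}}) : R :=
  \sum_(w in powerset (edges adj) | P w)
     p ^+ #|w| * (1 - p) ^+ (#|edges adj| - #|w|).

(* Main.v *)
Require Import Defs.
From mathcomp Require Import all_boot all_order all_algebra.
From mathcomp Require Import reals.
From mathcomp Require Import ring lra zify.
Import Order.TTheory GRing.Theory Num.Theory.

Section Graph.
Variables (V : finType) (adj : rel V).
Hypothesis Hs : forall x y, adj x y = adj y x.

Definition inc (v : V) : {set {set V}} := [set e in edges adj | v \in e].

Lemma edge_inv e v : e \in edges adj -> v \in e -> exists y, adj v y /\ e = [set v; y].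
Proof.
rewrite inE => /existsP [x /existsP [y /andP [axy /eqP ->]]].
rewrite in_set2 => /orP [/eqP -> | /eqP ->].
  by exists y.
by exists x; rewrite Hs setUC.
Qed.

Lemma card_inc d v : max_degree_le adj d -> (#|inc v| <= d)%N.
Proof.
move=> Hd; apply: leq_trans (Hd v).
apply: leq_trans (leq_imset_card (fun y => [set v; y]) _).
apply: subset_leq_card; apply/subsetP => e /setIdP [eE ve].
have [y [ay ->]] := edge_inv _ _ eE ve.
by apply/imsetP; exists y; rewrite ?inE.
Qed.

Lemma inc_disj u v : u != v -> ~~ adj u v -> [disjoint inc u & inc v].
Proof.
move=> uv nuv; apply/pred0P => e /=; apply/negP => /andP [].
move=> /setIdP [eE ue] /setIdP [_ ve].
have [y [ay ey]] := edge_inv _ _ eE ue.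
move: ve; rewrite ey in_set2 => /orP [/eqP vu | /eqP vy].
  by move: uv; rewrite vu eqxx.
by move: nuv; rewrite vy ay.
Qed.

Lemma open_sym (w : {set {set V}}) : symmetric (open_adj w).
Proof. by move=> x y; rewrite /open_adj eq_sym setUC. Qed.

Lemma iso_no_edge (w : {set {set V}}) v y : w \subset edges adj ->
  [disjoint w & inc v] -> open_adj w v y = false.
Proof.
move=> wE dv; apply/negP => /andP [_ hw].
have : [set v; y] \in inc v by rewrite inE (subsetP wE _ hw) in_set2 eqxx.
by rewrite (disjointFr dv hw).
Qed.

Lemma iso_connect (w : {set {set V}}) v y : w \subset edges adj ->
  [disjoint w & inc v] -> connect (open_adj w) v y -> y = v.
Proof.
move=> wE dv /connectP [[|z p] /= pth ->] //.
by move: pth; rewrite iso_no_edge.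
Qed.

Lemma largest_le (w : {set {set V}}) : w \subset edges adj ->
  (largest_component w <= maxn 1 (#|V| - #|[set v | [disjoint w & inc v]]|))%N.
Proof.
move=> wE; rewrite /largest_component; apply/bigmax_leqP => v _.
set Iso := [set v | [disjoint w & inc v]].
case vI: (v \in Iso).
  rewrite leq_max; apply/orP; left.
  rewrite -(cards1 v); apply: subset_leq_card; apply/subsetP => y; rewrite !inE.
  move: vI; rewrite inE => vI.
  by move/(iso_connect _ _ _ wE vI) => ->.
rewrite leq_max; apply/orP; right.
rewrite -(cardsC Iso) addKn.
apply: subset_leq_card; apply/subsetP => y; rewrite !inE => cvy.
apply/negP => yI.
have cyv : connect (open_adj w) y v by rewrite (sym_connect_sym (open_sym w)).
by move: vI; rewrite (iso_connect _ _ _ wE yI cyv) inE yI.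
Qed.
End Graph.

Local Open Scope ring_scope.

Lemma L1 (R : realFieldType) (a m x : R) : a <= m ^+ 2 + x -> a - 2 * m * m + m ^+ 2 <= x.
Proof. rewrite expr2; lra. Qed.

Lemma L2 (R : realFieldType) (q N L : R) : 0 < q -> q <= 1 -> 3 <= N ->
  (1 - q / 2) * N <= L -> L <= 1 -> False.
Proof. move=> *; nra. Qed.

Lemma L3 (R : realFieldType) (q N L Z m : R) : 0 < q -> N * q <= m -> 0 < m ->
  (1 - q / 2) * N <= L -> L <= N - Z -> (m / 2) ^+ 2 <= (Z - m) ^+ 2.
Proof.
move=> q0 mq m0 H1 H2.
have : Z <= m / 2 by nra.
move=> HZ; rewrite !expr2; nra.
Qed.

Lemma L4 (R : realFieldType) (q e N D m : R) : 0 < q -> 0 < e -> 0 < N ->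
  N * q <= m -> 4 * D < N * (q ^+ 2 * e) -> N * D <= e * (m / 2) ^+ 2.
Proof.
move=> q0 e0 N0 mq H.
have Nq0 : 0 <= N * q by apply: ltW; apply: mulr_gt0.
have H2 : (N * q) ^+ 2 <= m ^+ 2 by rewrite !expr2; apply: ler_pM.
have : N * D * 4 <= e * (N * q) ^+ 2.
  have -> : e * (N * q) ^+ 2 = N * (N * (q ^+ 2 * e)) by ring.
  nra.
move=> H3.
have : e * (N * q) ^+ 2 <= e * m ^+ 2 by apply: ler_wpM2l => //; apply: ltW.
move=> H4.
have -> : e * (m / 2) ^+ 2 = e * m ^+ 2 / 4 by field.
lra.
Qed.

Section Binom.
Variable R : comRingType.
Lemma sum_subsets (T : finType) (x y : R) (D : {set T}) :
  \sum_(w in powerset D) x ^+ #|w| * y ^+ (#|D| - #|w|) = (x + y) ^+ #|D|.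
Proof.
pose F i := if i \in D then x else 0.
pose G i := if i \in D then y else 1.
have := @bigA_distr R 0 1 *%R +%R T F G.
have -> : \prod_i (F i + G i) = (x + y) ^+ #|D|.
  rewrite (bigID (mem D)) /= -prodr_const.
  rewrite [X in _ * X]big1 ?mulr1; last by move=> i /negbTE Hi; rewrite /F /G Hi add0r.
  by apply: eq_bigr => i Hi; rewrite /F /G Hi.
move=> ->.
rewrite [RHS](bigID (fun w => w \in powerset D)) /=.
rewrite [X in _ = _ + X]big1 ?addr0; last first.
  move=> J; rewrite powersetE => /subsetPn [i iJ iD].
  by rewrite (bigD1 i) //= iJ /F (negbTE iD) mul0r.
apply: eq_bigr => J; rewrite powersetE => JD.
rewrite (bigID (mem J)) /=.
rewrite (eq_bigr (fun _ => x)); last by move=> i iJ; rewrite iJ /F (subsetP JD i iJ).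
rewrite prodr_const; congr (_ * _).
rewrite (eq_bigr (fun i => if i \in D then y else 1)); last by move=> i /negbTE ->.
rewrite -big_mkcondr /= prodr_const; congr (_ ^+ _).
rewrite -(setIidPr JD) -cardsD; apply: eq_card => i.
rewrite !inE [in RHS]unfold_in /= !inE; by case: (i \in D); case: (i \in J).
Qed.
End Binom.

Section Prob.
Variables (R : realType) (T : finType) (Es : {set T}) (g : R).
Hypothesis g0 : 0 <= g.
Hypothesis g1 : g < 1.
Definition wt (w : {set T}) := g ^+ #|w| * (1 - g) ^+ (#|Es| - #|w|).
Definition Ex (f : {set T} -> R) := \sum_(w in powerset Es) wt w * f w.

Lemma wt_ge0 w : 0 <= wt w.
Proof. have := g0; have := g1; move=> ? ?; apply: mulr_ge0; apply: exprn_ge0; lra. Qed.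

Lemma key (F : {set T}) : F \subset Es ->
  \sum_(w in powerset Es | [disjoint w & F]) wt w = (1 - g) ^+ #|F|.
Proof.
move=> FE.
have cE : #|Es| = (#|Es :\: F| + #|F|)%N.
  by rewrite cardsD (setIidPr FE) subnK // subset_leq_card.
rewrite (eq_bigl (fun w => w \in powerset (Es :\: F))); last first.
  by move=> w; rewrite !powersetE subsetD.
transitivity (\sum_(w in powerset (Es :\: F)) (g ^+ #|w| * (1 - g) ^+ (#|Es :\: F| - #|w|)) * (1 - g) ^+ #|F|); first last.
  by rewrite -mulr_suml sum_subsets subrKC expr1n mul1r.
  apply: eq_bigr.
  move=> w; rewrite powersetE => wD.
  have := subset_leq_card wD => le.
  rewrite /wt -mulrA -exprD; congr (_ * _ ^+ _); lia.
Qed.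

Lemma Ex_disj (F : {set T}) : F \subset Es ->
  Ex (fun w => ([disjoint w & F] : nat)%:R) = (1 - g) ^+ #|F|.
Proof.
move=> FE; rewrite -key // big_mkcondr /=; apply: eq_bigr => w _.
by case: [disjoint w & F]; rewrite ?mulr1 ?mulr0.
Qed.

Lemma Ex1 : Ex (fun _ => 1) = 1.
Proof.
have H := @Ex_disj set0 (sub0set Es); rewrite cards0 expr0 in H; rewrite -[RHS]H.
by apply: eq_bigr => w _; rewrite -setI_eq0 setI0 eqxx.
Qed.

Lemma ExD f h : Ex (fun w => f w + h w) = Ex f + Ex h.
Proof. by rewrite /Ex -big_split; apply: eq_bigr => w _; rewrite mulrDr. Qed.
Lemma ExB f h : Ex (fun w => f w - h w) = Ex f - Ex h.
Proof. by rewrite /Ex -sumrB; apply: eq_bigr => w _; rewrite mulrBr. Qed.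
Lemma ExZ c f : Ex (fun w => c * f w) = c * Ex f.
Proof. by rewrite /Ex mulr_sumr; apply: eq_bigr => w _; rewrite mulrCA. Qed.
Lemma ExC c : Ex (fun _ => c) = c.
Proof.
transitivity (Ex (fun w => c * 1)); first by apply: eq_bigr => w _; rewrite mulr1.
by rewrite ExZ Ex1 mulr1.
Qed.
Lemma Ex_sum (I : finType) (f : I -> {set T} -> R) :
  Ex (fun w => \sum_i f i w) = \sum_i Ex (f i).
Proof.
rewrite /Ex exchange_big /=; apply: eq_bigr => w _; by rewrite mulr_sumr.
Qed.
Lemma Ex_le f h : (forall w, w \subset Es -> f w <= h w) -> Ex f <= Ex h.
Proof.
move=> H; apply: ler_sum => w; rewrite powersetE => wE.
by apply: ler_wpM2l; [apply: wt_ge0 | apply: H].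
Qed.

Lemma markov (P : pred {set T}) (f : {set T} -> R) (t : R) : 0 < t ->
  (forall w : {set T}, w \subset Es -> 0 <= f w) ->
  (forall w : {set T}, w \subset Es -> P w -> t <= f w) ->
  \sum_(w in powerset Es | P w) wt w <= Ex f / t.
Proof.
move=> t0 f0 ft; rewrite ler_pdivlMr // mulr_suml big_mkcondr /=.
apply: ler_sum => w; rewrite powersetE => wE.
case Pw: (P w).
  by apply: ler_wpM2l; [apply: wt_ge0 | apply: ft].
by apply: mulr_ge0; [apply: wt_ge0 | apply: f0].
Qed.
End Prob.
Arguments Ex {R T}. Arguments wt {R T}.
Arguments key {R T Es g}.
Arguments Ex_disj {R T Es g}.
Arguments Ex1 {R T Es g}.
Arguments ExD {R T Es g}.
Arguments ExB {R T Es g}.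
Arguments ExZ {R T Es g}.
Arguments ExC {R T Es g}.
Arguments Ex_sum {R T Es g}.
Arguments Ex_le {R T Es g}.
Arguments markov {R T Es g}.

Lemma disjU (T : finType) (w A B : {set T}) :
  [disjoint w & A :|: B] = [disjoint w & A] && [disjoint w & B].
Proof. by rewrite !disjoints_subset setCU subsetI. Qed.

Lemma count_sum (V : finType) (P : pred V) : \sum_v (P v : nat) = #|P|.
Proof.
rewrite -sum1_card [RHS]big_mkcond /=; apply: eq_bigr => v _.
rewrite unfold_in; by case: (P v).
Qed.

Lemma graph_bound (R : realType) (V : finType) (adj : rel V) (d : nat) (g eps : R) :
  (forall x y, adj x y = adj y x) -> max_degree_le adj d -> 0 <= g -> g < 1 -> 0 < eps ->
  (3 <= #|V|)%N ->
  4 * (1 + d%:R) / ((1-g)^+d ^+2 * eps) < #|V|%:R ->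
  mu adj g (fun w => (1 - (1-g)^+d / 2) * #|V|%:R <= (largest_component w)%:R) <= eps.
Proof.
move=> Hs Hd g0 g1 e0 N3 Nbig.
set N := #|V|; set q := (1 - g) ^+ d.
set Es := edges adj.
have g1' : 0 <= 1 - g <= 1 by apply/andP; split; lra.
have incE v : @inc V adj v \subset Es by apply/subsetP => e /setIdP [].
pose I v (w : {set {set V}}) : R := ([disjoint w & @inc V adj v] : nat)%:R.
pose Z w := \sum_v I v w.
pose p v := (1 - g) ^+ #|@inc V adj v|.
pose m := \sum_v p v.
have q0 : 0 < q by apply: exprn_gt0; lra.
have q1 : q <= 1 by apply: exprn_ile1; lra.
have pq v : q <= p v.
  by apply: ler_wiXn2l; [lra|lra|apply: card_inc].
have mq : N%:R * q <= m.
  rewrite /m.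
  have -> : N%:R * q = \sum_(v : V) q by rewrite sumr_const mulr_natl.
  by apply: ler_sum => v _.
have N0 : (3 : R) <= N%:R by rewrite (ler_nat R 3 N).
have m0 : 0 < m by apply: lt_le_trans mq; apply: mulr_gt0; lra.
have ExI v : Ex Es g (I v) = p v by apply: (Ex_disj g0 g1).
have ExZ' : Ex Es g Z = m by rewrite Ex_sum; apply: eq_bigr => v _.
pose b u v := (u == v) || adj u v.
have ExII u v : Ex Es g (fun w => I u w * I v w) <= p u * p v + (b u v)%:R.
  have -> : Ex Es g (fun w => I u w * I v w) = (1 - g) ^+ #|@inc V adj u :|: @inc V adj v|.
    rewrite -(@Ex_disj _ _ Es g g0 g1); last by rewrite subUset !incE.
    by apply: eq_bigr => w _; rewrite /I -natrM mulnb disjU.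
  rewrite /b; case buv: ((u == v) || adj u v) => /=; rewrite ?mulr1n ?mulr0n ?addr0.
    have pp : 0 <= p u * p v by apply: mulr_ge0; apply: exprn_ge0; case/andP: g1'.
    apply: le_trans (exprn_ile1 _ _ _) _; try by case/andP: g1'.
    by rewrite lerDr.
  move/negbT: buv; rewrite negb_or => /andP [uv nuv].
  rewrite cardsU (disjoint_setI0 (@inc_disj V adj Hs u v uv nuv)) cards0 subn0 exprD.
  by rewrite /p lexx.
have ExZ2 : Ex Es g (fun w => Z w ^+ 2) <= m ^+ 2 + (N * (1 + d))%:R.
  have -> : Ex Es g (fun w => Z w ^+ 2) = \sum_u \sum_v Ex Es g (fun w => I u w * I v w).
    transitivity (Ex Es g (fun w => \sum_u \sum_v I u w * I v w)).
      apply: eq_bigr => w _; congr (_ * _); rewrite expr2 /Z mulr_suml.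
      by apply: eq_bigr => u _; rewrite mulr_sumr.
    by rewrite Ex_sum; apply: eq_bigr => u _; rewrite Ex_sum.
  have -> : m ^+ 2 = \sum_u \sum_v p u * p v.
    by rewrite expr2 /m mulr_suml; apply: eq_bigr => u _; rewrite mulr_sumr.
  have bd : \sum_u \sum_v (b u v)%:R <= (N * (1 + d))%:R :> R.
    rewrite (eq_bigr (fun u => (\sum_v b u v)%:R)); last by move=> u _; rewrite natr_sum.
    rewrite -natr_sum ler_nat.
    rewrite (_ : (N * (1 + d) = \sum_(u : V) (1 + d))%N); last by rewrite sum_nat_const.
    apply: leq_sum => u _; rewrite count_sum.
    have -> : #|b u| = #|u |: [set v | adj u v]|.
      by apply: eq_card => v; rewrite !inE eq_sym.
    rewrite cardsU1; have := Hd u; case: (u \notin _) => /=; lia.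
  apply: le_trans (lerD (lexx _) bd).
  rewrite -big_split; apply: ler_sum => u _; rewrite -big_split; apply: ler_sum => v _.
  exact: ExII.
pose f w := (Z w - m) ^+ 2.
have Exf : Ex Es g f <= (N * (1 + d))%:R.
  have -> : Ex Es g f = Ex Es g (fun w => (Z w ^+ 2 - (2 * m) * Z w) + m ^+ 2).
    by apply: eq_bigr => w _; congr (_ * _); rewrite /f; ring.
  rewrite ExD ExB ExZ (ExC g0 g1) ExZ'; exact: L1.
have Zcard w : Z w = (#|[set v | [disjoint w & @inc V adj v]]|)%:R.
  rewrite /Z /I -natr_sum count_sum; congr (_%:R); apply: eq_card => v.
  by rewrite inE.
have N0' : (0 : R) < N%:R by apply: lt_le_trans N0.
have ev (w : {set {set V}}) : w \subset Es ->
    (1 - q / 2) * N%:R <= (largest_component w)%:R -> (m / 2) ^+ 2 <= f w.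
  move=> wE H.
  have := @largest_le V adj w wE; rewrite leq_max => /orP [L1' | LK].
    have L1r : (largest_component w)%:R <= (1 : R) by rewrite (ler_nat R _ 1).
    by case: (@L2 _ _ _ _ q0 q1 N0 H L1r).
  have KN : (#|[set v | [disjoint w & @inc V adj v]]| <= N)%N by apply: max_card.
  move: LK; rewrite -(ler_nat R) (natrB _ KN) -Zcard => LK.
  exact: (@L3 _ _ _ _ _ _ q0 mq m0 H LK).
have tpos : 0 < (m / 2) ^+ 2 by apply: exprn_gt0; apply: divr_gt0.
rewrite /mu.
apply: le_trans (markov g0 g1 _ f _ tpos _ ev) _.
  by move=> w _; apply: sqr_ge0.
rewrite ler_pdivrMr //.
apply: le_trans Exf _.
rewrite natrM natrD.
have H1 : 4 * (1 + d%:R) < N%:R * (q ^+ 2 * eps).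
  by rewrite -ltr_pdivrMr // mulr_gt0 // exprn_gt0.
exact: (@L4 _ _ _ _ _ _ q0 e0 N0' mq H1).
Qed.

Theorem lemma4p5 (R : realType) (V : nat -> finType) (adj : forall n, rel (V n))
    (b : R) (d : nat) (gamma eps : R) :
  0 < b -> (0 < d)%N -> expander adj b d ->
  0 <= gamma -> gamma < 1 -> 0 < eps -> eps < 1 ->
  exists c : R, c < 1 /\
    exists M : nat, forall n : nat, (M <= #|V n|)%N ->
      mu (adj n) gamma
         (fun w => c * (#|V n|)%:R <= (largest_component w)%:R) <= eps.
Proof.
move=> b0 d0 [Hsg [Hd _]] g0 g1 e0 e1.
have q0 : 0 < (1 - gamma) ^+ d by apply: exprn_gt0; lra.
exists (1 - (1 - gamma) ^+ d / 2); split; first lra.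
set K0 := 4 * (1 + d%:R) / ((1 - gamma) ^+ d ^+ 2 * eps).
exists (maxn 3 (Num.truncn K0).+1) => n; rewrite geq_max => /andP [N3 NK].
apply: graph_bound => //.
- by move=> x y; case: (Hsg n) => ->.
- apply: lt_le_trans (truncnS_gt K0) _.
  by rewrite ler_nat.
Qed.
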